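(* Let $C\subset\mathbb{R}^2$ be compact and let $D$ be a closed disc whose center lies in $C$. Then \[\mathrm{diam}(C\cup D)\le\max\left(\mathrm{diam}(C)+\sqrt{\frac{2(\mathrm{area}(C\cup D)-\mathrm{area}(C))}{\pi}},\ \sqrt{\frac{4\,\mathrm{area}(C\cup D)}{\pi}}\right).\]
   Context: $\mathrm{area}$ denotes two-dimensional Lebesgue measure and $\mathrm{diam}(B)=\sup_{x,y\in B}\|x-y\|$ (Euclidean distance). *)

(* Defs.v *)
From Stdlib Require Import Reals Lra ClassicalEpsilon.
Open Scope R_scope.

Definition pt := (R * R)%type.
Definition dist2 (x y : pt) : R :=
  sqrt ((fst x - fst y)^2 + (snd x - snd y)^2).

Definition open2 (A : pt -> Prop) : Prop :=
  forall x, A x -> exists e, 0 < e /\ forall y, dist2 x y < e -> A y.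
Definition closed2 (A : pt -> Prop) : Prop := open2 (fun x => ~ A x).
Definition bounded2 (A : pt -> Prop) : Prop :=
  exists M, forall x, A x -> dist2 (0,0) x <= M.
(* Compactness in R^2 (Heine-Borel: closed and bounded). *)
Definition compact2 (A : pt -> Prop) : Prop := closed2 A /\ bounded2 A.

Definition union2 (A B : pt -> Prop) : pt -> Prop := fun x => A x \/ B x.
Definition closed_disc (c : pt) (r : R) : pt -> Prop :=
  fun x => dist2 c x <= r.

Definition dists (B : pt -> Prop) (d : R) : Prop :=
  exists x y, B x /\ B y /\ d = dist2 x y.
Definition diam (B : pt -> Prop) : R :=
  epsilon (inhabits 0) (fun d => is_lub (dists B) d).

(* Two-dimensional Lebesgue (outer) measure: infimum of the total area of
   countable covers by closed axis-parallel rectangles [a,b]x[c,d]. *)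
Definition rect := (R * R * R * R)%type.  (* (a, b, c, d) *)
Definition in_rect (q : rect) (x : pt) : Prop :=
  let '(a, b, c, d) := q in a <= fst x <= b /\ c <= snd x <= d.
Definition rect_ok (q : rect) : Prop :=
  let '(a, b, c, d) := q in a <= b /\ c <= d.
Definition rect_area (q : rect) : R :=
  let '(a, b, c, d) := q in (b - a) * (d - c).

Definition cover_sums (A : pt -> Prop) (s : R) : Prop :=
  exists q : nat -> rect,
    (forall n, rect_ok (q n)) /\
    (forall x, A x -> exists n, in_rect (q n) x) /\
    infinite_sum (fun n => rect_area (q n)) s.

Definition is_glb (E : R -> Prop) (m : R) : Prop :=
  (forall s, E s -> m <= s) /\ (forall m', (forall s, E s -> m' <= s) -> m' <= m).

Definition area (A : pt -> Prop) : R :=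
  epsilon (inhabits 0) (fun m => is_glb (cover_sums A) m).

(* Main.v *)
Require Import Defs.
From Stdlib Require Import Reals Lra Lia Psatz ClassicalEpsilon Classical FunctionalExtensionality PropExtensionality List Rgeom.
From Coquelicot Require Coquelicot.
Open Scope R_scope.

Lemma set_ext (A B : pt -> Prop) : (forall x, A x <-> B x) -> A = B.
Proof. intros H; apply functional_extensionality; intros x; apply propositional_extensionality; auto. Qed.

Lemma divmodK K n j : (j < K)%nat -> ((K*n+j)/K = n)%nat /\ ((K*n+j) mod K = j)%nat.
Proof.
intros. assert (HK: K <> 0%nat) by lia.
assert (E: ((K*n+j)/K = n)%nat).
{ rewrite Nat.mul_comm, Nat.div_add_l by exact HK. rewrite Nat.div_small by lia. lia. }
split; auto. rewrite Nat.Div0.mod_eq. rewrite E. lia. Qed.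

Lemma rect_area_nonneg q : rect_ok q -> 0 <= rect_area q.
Proof. destruct q as [[[a b] c] d]; simpl; intros [H1 H2]; nra. Qed.

Lemma psum_S f n : sum_f_R0 f (S n) = sum_f_R0 f n + f (S n).
Proof. reflexivity. Qed.

Lemma psum_mono f n m : (forall k, 0 <= f k) -> (n <= m)%nat -> sum_f_R0 f n <= sum_f_R0 f m.
Proof.
intros Hf H; induction H. lra. rewrite psum_S. specialize (Hf (S m)). lra.
Qed.

Lemma psum_ge_last f n : (forall k, 0 <= f k) -> f n <= sum_f_R0 f n.
Proof. intros Hf; destruct n. simpl; lra. rewrite psum_S. pose proof (psum_mono f 0 n Hf ltac:(lia)). simpl in H. specialize (Hf 0%nat). lra. Qed.

Lemma psum_nonneg f n : (forall k, 0 <= f k) -> 0 <= sum_f_R0 f n.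
Proof. intros Hf. pose proof (psum_ge_last f 0 Hf). pose proof (psum_mono f 0 n Hf ltac:(lia)). specialize (Hf 0%nat). lra. Qed.

Lemma psum_le f g n : (forall k, f k <= g k) -> sum_f_R0 f n <= sum_f_R0 g n.
Proof. intros H; induction n; simpl; auto. specialize (H (S n)); lra. Qed.

Lemma psum_plus f g n : sum_f_R0 (fun k => f k + g k) n = sum_f_R0 f n + sum_f_R0 g n.
Proof. induction n; simpl; lra. Qed.

Lemma bounded_partial_cv f B : (forall k, 0 <= f k) -> (forall n, sum_f_R0 f n <= B) ->
  exists l, infinite_sum f l /\ l <= B.
Proof.
intros Hf HB.
assert (Hg : Un_growing (sum_f_R0 f)). { intros n. rewrite psum_S. specialize (Hf (S n)). lra. }
destruct (growing_cv _ Hg) as [l Hl]. { exists B. intros y [n ->]. apply HB. }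
exists l; split. exact Hl.
destruct (Rle_dec l B) as [h|h]; auto.
destruct (Hl (l - B)) as [N HN]. lra.
specialize (HN N (le_n _)). specialize (HB N). unfold R_dist in HN.
apply Rabs_def2 in HN. lra.
Qed.

Lemma infsum_partial_le f s : (forall k, 0 <= f k) -> infinite_sum f s -> forall n, sum_f_R0 f n <= s.
Proof.
intros Hf Hs n. apply growing_ineq; auto. intros m. rewrite psum_S. specialize (Hf (S m)). lra.
Qed.

Lemma block_sum K g N : (1 <= K)%nat ->
  sum_f_R0 g (K*N + (K-1)) = sum_f_R0 (fun n => sum_f_R0 (fun j => g (K*n + j)%nat) (K-1)) N.
Proof.
intros HK. induction N.
- simpl. replace (K*0 + (K-1))%nat with (K-1)%nat by lia. apply sum_eq. intros. f_equal. lia.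
- rewrite psum_S. rewrite <- IHN.
  rewrite (tech2 g (K*N + (K-1)) (K * S N + (K-1))) by lia.
  f_equal. replace (K * S N + (K - 1) - S (K * N + (K - 1)))%nat with (K-1)%nat by lia.
  apply sum_eq. intros. f_equal. lia.
Qed.

Lemma glb_exists (E : R -> Prop) : (exists x, E x) -> (forall s, E s -> 0 <= s) -> exists m, is_glb E m.
Proof.
intros [x Hx] H0.
destruct (completeness (fun y => E (-y))) as [m [Hm1 Hm2]].
- exists 0. intros y Hy. apply H0 in Hy. lra.
- exists (-x). rewrite Ropp_involutive. auto.
- exists (-m). split.
  + intros s Hs. assert (-s <= m). { apply Hm1. rewrite Ropp_involutive; auto. } lra.
  + intros m' Hm'. assert (m <= - m'). { apply Hm2. intros y Hy. apply Hm' in Hy. lra. } lra.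
Qed.
Definition cover (X : pt -> Prop) (q : nat -> rect) :=
  (forall n, rect_ok (q n)) /\ (forall x, X x -> exists n, in_rect (q n) x).

Definition ra (q : nat -> rect) := fun n => rect_area (q n).

Lemma ra_nonneg q : (forall n, rect_ok (q n)) -> forall n, 0 <= ra q n.
Proof. intros H n; apply rect_area_nonneg; auto. Qed.

Lemma abs_le_norm a b : Rabs a <= sqrt (a^2 + b^2).
Proof.
rewrite <- sqrt_Rsqr_abs. apply sqrt_le_1_alt. unfold Rsqr. nra.
Qed.

Lemma norm_le_abs a b : sqrt (a^2 + b^2) <= Rabs a + Rabs b.
Proof.
rewrite <- (sqrt_Rsqr (Rabs a + Rabs b)) by (pose proof (Rabs_pos a); pose proof (Rabs_pos b); lra).
apply sqrt_le_1_alt. unfold Rsqr.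
pose proof (Rabs_pos a); pose proof (Rabs_pos b).
assert (a^2 = Rabs a * Rabs a) by (rewrite <- Rabs_mult; rewrite Rabs_pos_eq; nra).
assert (b^2 = Rabs b * Rabs b) by (rewrite <- Rabs_mult; rewrite Rabs_pos_eq; nra).
nra.
Qed.

Lemma abs_le_b x M : Rabs x <= M -> -M <= x <= M.
Proof. unfold Rabs; destruct (Rcase_abs x); lra. Qed.

Definition boxb (X : pt -> Prop) M := forall x, X x -> Rabs (fst x) <= M /\ Rabs (snd x) <= M.

Lemma bounded_box X : bounded2 X -> exists M, 0 <= M /\ boxb X M.
Proof.
intros [M HM]. exists (Rabs M). split. apply Rabs_pos.
intros x Hx. specialize (HM x Hx). unfold dist2 in HM. cbn [fst snd] in HM.
pose proof (abs_le_norm (0 - fst x) (0 - snd x)).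
pose proof (abs_le_norm (0 - snd x) (0 - fst x)).
rewrite Rplus_comm in H0.
replace (0 - fst x) with (- fst x) in * by ring. replace (0 - snd x) with (- snd x) in * by ring.
rewrite Rabs_Ropp in H, H0. pose proof (Rle_abs M). lra.
Qed.

Lemma box_bounded X M : boxb X M -> bounded2 X.
Proof.
intros H. exists (M + M). intros x Hx. destruct (H x Hx). unfold dist2; cbn [fst snd].
pose proof (norm_le_abs (0 - fst x) (0 - snd x)).
replace (0 - fst x) with (- fst x) in * by ring. replace (0 - snd x) with (- snd x) in * by ring.
rewrite !Rabs_Ropp in H2. lra.
Qed.

Lemma bounded_sub X Y : bounded2 Y -> (forall x, X x -> Y x) -> bounded2 X.
Proof. intros [M HM] H. exists M. auto. Qed.

Lemma bounded_union X Y : bounded2 X -> bounded2 Y -> bounded2 (union2 X Y).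
Proof.
intros [M HM] [N HN]. exists (Rmax M N). intros x [h|h].
apply HM in h. pose proof (Rmax_l M N). lra.
apply HN in h. pose proof (Rmax_r M N). lra.
Qed.

Lemma cover_sums_nonneg X s : cover_sums X s -> 0 <= s.
Proof.
intros [q [Hok [Hc Hs]]].
pose proof (infsum_partial_le (ra q) s (ra_nonneg q Hok) Hs 0%nat). simpl in H.
pose proof (ra_nonneg q Hok 0). unfold ra in *. lra.
Qed.

Lemma cover_sums_exists X : bounded2 X -> exists s, cover_sums X s.
Proof.
intros HX. destruct (bounded_box X HX) as [M [HM0 HM]].
set (q := fun n : nat => match n with O => (-M, M, -M, M) | S _ => (0,0,0,0) end).
exists ((M - - M) * (M - - M)). exists q. split; [|split].
- intros [|n]; simpl; lra.
- intros x Hx. exists 0%nat. destruct (HM x Hx). simpl.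
  destruct x as [x1 x2]; simpl in *. apply abs_le_b in H. apply abs_le_b in H0. lra.
- intros eps Heps. exists 0%nat. intros n _.
  assert (sum_f_R0 (fun n => rect_area (q n)) n = (M - - M) * (M - - M)).
  { induction n. reflexivity. rewrite psum_S, IHn. simpl. ring. }
  rewrite H. unfold R_dist. rewrite Rminus_diag, Rabs_R0. lra.
Qed.

Lemma area_spec X : bounded2 X -> is_glb (cover_sums X) (area X).
Proof.
intros HX. unfold area. apply epsilon_spec.
apply glb_exists. apply cover_sums_exists; auto. apply cover_sums_nonneg.
Qed.

Lemma area_le_cover X s : bounded2 X -> cover_sums X s -> area X <= s.
Proof. intros HX Hs. apply (area_spec X HX). auto. Qed.

Lemma area_ge0 X : bounded2 X -> 0 <= area X.
Proof. intros HX. apply (area_spec X HX). apply cover_sums_nonneg. Qed.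

Lemma area_approx X eps : bounded2 X -> 0 < eps -> exists s, cover_sums X s /\ s < area X + eps.
Proof.
intros HX He. apply NNPP. intros Hn.
assert (area X + eps <= area X). { apply (area_spec X HX). intros s Hs.
  apply Rnot_lt_le. intros Hl. apply Hn. exists s; auto. } lra.
Qed.

Lemma area_le_partial X q B : bounded2 X -> cover X q ->
  (forall n, sum_f_R0 (ra q) n <= B) -> area X <= B.
Proof.
intros HX [Hok Hc] HB. destruct (bounded_partial_cv (ra q) B (ra_nonneg q Hok) HB) as [l [Hl HlB]].
assert (area X <= l). { apply area_le_cover; auto. exists q. split; auto. }
lra.
Qed.

Lemma area_mono X Y : bounded2 Y -> (forall x, X x -> Y x) -> area X <= area Y.
Proof.
intros HY H. assert (HX : bounded2 X) by (eapply bounded_sub; eauto).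
apply (area_spec Y HY). intros s [q [Hok [Hc Hs]]]. apply area_le_cover; auto.
exists q; split; [|split]; auto.
Qed.

Lemma area_empty X : (forall x, ~ X x) -> area X = 0.
Proof.
intros H. assert (HX : bounded2 X). { exists 0. intros x Hx. destruct (H x Hx). }
apply Rle_antisym; [|apply area_ge0; auto].
apply (area_le_partial X (fun _ => (0,0,0,0)) 0); auto.
split. intros n; simpl; lra. intros x Hx; destruct (H x Hx).
intros n. induction n; unfold ra in *; simpl in *; lra.
Qed.

Lemma area_le_blocks X K (F : nat -> nat -> rect) B : bounded2 X -> (1 <= K)%nat ->
  cover X (fun m => F (m / K)%nat (m mod K)%nat) ->
  (forall N, sum_f_R0 (fun n => sum_f_R0 (fun j => rect_area (F n j)) (K-1)) N <= B) ->
  area X <= B.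
Proof.
intros HX HK Hc HB. apply (area_le_partial X _ B HX Hc). intros M.
destruct Hc as [Hok _].
eapply Rle_trans. apply (psum_mono _ M (K*M + (K-1)) (ra_nonneg _ Hok)). nia.
rewrite block_sum by auto. eapply Rle_trans; [|apply (HB M)]. right.
apply sum_eq. intros n _. apply sum_eq. intros j Hj. unfold ra.
destruct (divmodK K n j ltac:(lia)) as [E1 E2]. rewrite E1, E2. reflexivity.
Qed.

Lemma series_split f g h s : (forall n, 0 <= g n) -> (forall n, 0 <= h n) ->
  (forall n, f n = g n + h n) -> infinite_sum f s ->
  exists S1 S2, infinite_sum g S1 /\ infinite_sum h S2 /\ S1 + S2 = s.
Proof.
intros Hg Hh Hf Hs.
assert (Hf0 : forall n, 0 <= f n). { intros n; rewrite Hf; specialize (Hg n); specialize (Hh n); lra. }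
pose proof (infsum_partial_le f s Hf0 Hs) as Hp.
assert (Hpf : forall n, sum_f_R0 f n = sum_f_R0 g n + sum_f_R0 h n).
{ intros n. rewrite <- psum_plus. apply sum_eq. intros; auto. }
destruct (bounded_partial_cv g s Hg) as [S1 [H1 _]].
{ intros n. specialize (Hp n). rewrite Hpf in Hp. pose proof (psum_nonneg h n Hh). lra. }
destruct (bounded_partial_cv h s Hh) as [S2 [H2 _]].
{ intros n. specialize (Hp n). rewrite Hpf in Hp. pose proof (psum_nonneg g n Hg). lra. }
exists S1, S2. split; auto. split; auto.
pose proof (CV_plus _ _ _ _ H1 H2) as H3.
assert (H4 : infinite_sum f (S1 + S2)).
{ intros eps He. destruct (H3 eps He) as [N HN]. exists N. intros n Hn. rewrite Hpf. apply HN; auto. }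
apply (uniqueness_sum f); auto.
Qed.

Lemma area_subadd X Y : bounded2 X -> bounded2 Y -> area (union2 X Y) <= area X + area Y.
Proof.
intros HX HY. apply Rle_plus_epsilon. intros eps He.
destruct (area_approx X (eps/2) HX ltac:(lra)) as [s [[q [Hq1 [Hq2 Hq3]]] Hs]].
destruct (area_approx Y (eps/2) HY ltac:(lra)) as [s' [[q' [Hq1' [Hq2' Hq3']]] Hs']].
set (F := fun n j => match j with O => q n | _ => q' n end).
assert (area (union2 X Y) <= s + s').
{ apply (area_le_blocks _ 2 F); auto. apply bounded_union; auto. split.
  - intros m. unfold F. destruct (m mod 2)%nat; auto.
  - intros x [h|h].
    + destruct (Hq2 x h) as [n Hn]. exists (2*n)%nat. destruct (divmodK 2 n 0 ltac:(lia)) as [E1 E2].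
      rewrite Nat.add_0_r in E1, E2. rewrite E1, E2. exact Hn.
    + destruct (Hq2' x h) as [n Hn]. exists (2*n+1)%nat. destruct (divmodK 2 n 1 ltac:(lia)) as [E1 E2].
      rewrite E1, E2. exact Hn.
  - intros N. simpl (2-1)%nat. unfold F. simpl.
    pose proof (psum_plus (ra q) (ra q') N) as E. unfold ra in E. rewrite E.
    pose proof (infsum_partial_le _ _ (ra_nonneg q Hq1) Hq3 N).
    pose proof (infsum_partial_le _ _ (ra_nonneg q' Hq1') Hq3' N). unfold ra in *. lra. }
lra.
Qed.

Definition clamp a b v := Rmin b (Rmax a v).
Definition inter (E : pt -> Prop) q := fun z => E z /\ in_rect q z.
Definition minus (E : pt -> Prop) q := fun z => E z /\ ~ in_rect q z.

Definition piece (R0 q : rect) (j : nat) : rect :=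
  let '(a', b', c', d') := R0 in
  let '(a, b, c, d) := q in
  let x1 := clamp a b a' in let x2 := clamp a b b' in
  let y1 := clamp c d c' in let y2 := clamp c d d' in
  match j with
  | O => (x1, x2, y1, y2)
  | 1%nat => (a, x1, c, d)
  | 2%nat => (x2, b, c, d)
  | 3%nat => (x1, x2, c, y1)
  | _ => (x1, x2, y2, d)
  end.

Ltac clampt := unfold clamp, Rmin, Rmax in *; repeat (destruct Rle_dec); lra.

Lemma piece_ok R0 q j : rect_ok R0 -> rect_ok q -> rect_ok (piece R0 q j).
Proof.
destruct R0 as [[[a' b'] c'] d']; destruct q as [[[a b] c] d]; simpl.
intros [H1 H2] [H3 H4].
destruct j as [|[|[|[|j]]]]; simpl; split; clampt.
Qed.

Lemma piece_area R0 q : rect_ok R0 -> rect_ok q ->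
  rect_area (piece R0 q 0) + (rect_area (piece R0 q 1) + rect_area (piece R0 q 2) +
   rect_area (piece R0 q 3) + rect_area (piece R0 q 4)) = rect_area q.
Proof.
destruct R0 as [[[a' b'] c'] d']; destruct q as [[[a b] c] d]; simpl. intros. ring.
Qed.

Lemma piece_mid R0 q z : in_rect R0 z -> in_rect q z -> in_rect (piece R0 q 0) z.
Proof.
destruct R0 as [[[a' b'] c'] d']; destruct q as [[[a b] c] d]; destruct z as [x y]; simpl.
intros [[H1 H2] [H3 H4]] [[H5 H6] [H7 H8]]. split; split; clampt.
Qed.

Lemma piece_out R0 q z : rect_ok R0 -> ~ in_rect R0 z -> in_rect q z ->
  exists j, (j < 4)%nat /\ in_rect (piece R0 q (S j)) z.
Proof.
destruct R0 as [[[a' b'] c'] d']; destruct q as [[[a b] c] d]; destruct z as [x y]; simpl.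
intros [Ho1 Ho2] Hn [[H5 H6] [H7 H8]].
destruct (Rle_dec x (clamp a b a')).
{ exists 0%nat. split. lia. simpl. lra. }
destruct (Rle_dec (clamp a b b') x).
{ exists 1%nat. split. lia. simpl. lra. }
assert (a' <= x <= b') by clampt.
destruct (Rle_dec y (clamp c d c')).
{ exists 2%nat. split. lia. simpl. lra. }
destruct (Rle_dec (clamp c d d') y).
{ exists 3%nat. split. lia. simpl. lra. }
exfalso. apply Hn. split. lra. clampt.
Qed.

Lemma area_CR E R0 : bounded2 E -> rect_ok R0 ->
  area (inter E R0) + area (minus E R0) <= area E.
Proof.
intros HE HR. apply Rle_plus_epsilon. intros eps He.
destruct (area_approx E eps HE He) as [s [[q [Hq1 [Hq2 Hq3]]] Hs]].
destruct (series_split (ra q) (fun n => rect_area (piece R0 (q n) 0))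
   (fun n => rect_area (piece R0 (q n) 1) + rect_area (piece R0 (q n) 2) +
   rect_area (piece R0 (q n) 3) + rect_area (piece R0 (q n) 4)) s) as [S1 [S2 [H1 [H2 H3]]]].
- intros n. apply rect_area_nonneg, piece_ok; auto.
- intros n. pose proof (fun j => rect_area_nonneg _ (piece_ok R0 (q n) j HR (Hq1 n))).
  pose proof (H 1%nat); pose proof (H 2%nat); pose proof (H 3%nat); pose proof (H 4%nat). lra.
- intros n. unfold ra. rewrite <- (piece_area R0 (q n)); auto.
- exact Hq3.
- clear He. assert (area (inter E R0) <= S1).
  { apply (area_le_partial _ (fun n => piece R0 (q n) 0)).
    eapply bounded_sub; eauto. intros z [h _]; auto.
    split. intros n; apply piece_ok; auto.
    intros z [h1 h2]. destruct (Hq2 z h1) as [n Hn]. exists n. apply piece_mid; auto.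
    intros n. apply infsum_partial_le; auto. intros k. apply rect_area_nonneg. apply piece_ok; auto. }
  assert (area (minus E R0) <= S2).
  { apply (area_le_blocks _ 4 (fun n j => piece R0 (q n) (S j))); auto.
    eapply bounded_sub; eauto. intros z [h _]; auto. split.
    intros n; apply piece_ok; auto.
    intros z [h1 h2]. destruct (Hq2 z h1) as [n Hn].
    destruct (piece_out R0 (q n) z HR h2 Hn) as [j [Hj Hin]].
    exists (4*n+j)%nat. destruct (divmodK 4 n j Hj) as [E1 E2]. rewrite E1, E2. auto.
    intros N. simpl (4-1)%nat.
    assert (Hnn : forall n, 0 <= rect_area (piece R0 (q n) 1) + rect_area (piece R0 (q n) 2) +
     rect_area (piece R0 (q n) 3) + rect_area (piece R0 (q n) 4)).
    { intros n. pose proof (fun j => rect_area_nonneg _ (piece_ok R0 (q n) j HR (Hq1 n))) as H0.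
    pose proof (H0 1%nat); pose proof (H0 2%nat); pose proof (H0 3%nat); pose proof (H0 4%nat). lra. }
    pose proof (infsum_partial_le _ _ Hnn H2 N) as HH.
    eapply Rle_trans; [|apply HH]. right. apply sum_eq. intros. simpl. ring. }
  lra.
Qed.

Definition lenI a b a' b' := Rmax 0 (Rmin b b' - Rmax a a').
Definition areaI (q Q : rect) :=
  let '(a, b, c, d) := q in let '(a', b', c', d') := Q in lenI a b a' b' * lenI c d c' d'.

Lemma lenI_nonneg a b a' b' : 0 <= lenI a b a' b'.
Proof. unfold lenI. apply Rmax_l. Qed.

Lemma areaI_nonneg q Q : 0 <= areaI q Q.
Proof. destruct q as [[[a b] c] d]; destruct Q as [[[a' b'] c'] d']; simpl.
apply Rmult_le_pos; apply lenI_nonneg. Qed.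

Lemma lenI_split al be a m b : a <= m <= b -> lenI al be a b = lenI al be a m + lenI al be m b.
Proof. intros. unfold lenI, Rmin, Rmax. repeat destruct Rle_dec; lra. Qed.

Lemma lenI_le a b a' b' : a <= b -> lenI a b a' b' <= b - a.
Proof. intros. unfold lenI, Rmin, Rmax. repeat destruct Rle_dec; lra. Qed.

Lemma lenI_full a b a' b' : a <= a' -> a' <= b' -> b' <= b -> lenI a b a' b' = b' - a'.
Proof. intros. unfold lenI, Rmin, Rmax. repeat destruct Rle_dec; lra. Qed.

Definition quarter (Q : rect) (i : nat) : rect :=
  let '(a, b, c, d) := Q in
  let m := (a + b) / 2 in let n := (c + d) / 2 in
  match i with
  | O => (a, m, c, n)
  | 1%nat => (m, b, c, n)
  | 2%nat => (a, m, n, d)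
  | _ => (m, b, n, d)
  end.

Lemma areaI_quarters q Q : rect_ok Q ->
  areaI q Q = areaI q (quarter Q 0) + areaI q (quarter Q 1) + areaI q (quarter Q 2) + areaI q (quarter Q 3).
Proof.
destruct q as [[[a b] c] d]; destruct Q as [[[a' b'] c'] d']; simpl. intros [H1 H2].
rewrite (lenI_split a b a' ((a'+b')/2) b') by lra.
rewrite (lenI_split c d c' ((c'+d')/2) d') by lra. ring.
Qed.

Lemma area_quarters Q : rect_area Q = rect_area (quarter Q 0) + rect_area (quarter Q 1) + rect_area (quarter Q 2) + rect_area (quarter Q 3).
Proof. destruct Q as [[[a b] c] d]; simpl. field. Qed.

Definition bad (be : R) (q' : nat -> rect) (Q : rect) :=
  forall N, sum_f_R0 (fun n => areaI (q' n) Q) N <= be * rect_area Q.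

Lemma bad_quarter be q' Q : rect_ok Q -> bad be q' Q -> exists i, (i < 4)%nat /\ bad be q' (quarter Q i).
Proof.
intros HQ HB. apply NNPP. intros Hn.
assert (Hi : forall i, (i < 4)%nat -> exists N, sum_f_R0 (fun n => areaI (q' n) (quarter Q i)) N > be * rect_area (quarter Q i)).
{ intros i Hi. apply NNPP. intros H. apply Hn. exists i. split; auto. intros N.
  apply Rnot_lt_le. intros H'. apply H. exists N. auto. }
destruct (Hi 0%nat) as [N0 H0]; [lia|]. destruct (Hi 1%nat) as [N1 H1]; [lia|].
destruct (Hi 2%nat) as [N2 H2]; [lia|]. destruct (Hi 3%nat) as [N3 H3]; [lia|].
set (N := (N0 + N1 + N2 + N3)%nat).
assert (Hm : forall i Ni, (Ni <= N)%nat -> sum_f_R0 (fun n => areaI (q' n) (quarter Q i)) Ni <= sum_f_R0 (fun n => areaI (q' n) (quarter Q i)) N).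
{ intros. apply psum_mono; auto. intros; apply areaI_nonneg. }
pose proof (Hm 0%nat N0 ltac:(unfold N; lia)). pose proof (Hm 1%nat N1 ltac:(unfold N; lia)).
pose proof (Hm 2%nat N2 ltac:(unfold N; lia)). pose proof (Hm 3%nat N3 ltac:(unfold N; lia)).
specialize (HB N).
assert (E : sum_f_R0 (fun n => areaI (q' n) Q) N =
  sum_f_R0 (fun n => areaI (q' n) (quarter Q 0)) N + sum_f_R0 (fun n => areaI (q' n) (quarter Q 1)) N +
  sum_f_R0 (fun n => areaI (q' n) (quarter Q 2)) N + sum_f_R0 (fun n => areaI (q' n) (quarter Q 3)) N).
{ rewrite <- !psum_plus. apply sum_eq. intros. apply areaI_quarters; auto. }
rewrite E in HB. rewrite (area_quarters Q) in HB. lra.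
Qed.

Definition qa (q : rect) := let '(a, _, _, _) := q in a.
Definition qb (q : rect) := let '(_, b, _, _) := q in b.
Definition qc (q : rect) := let '(_, _, c, _) := q in c.
Definition qd (q : rect) := let '(_, _, _, d) := q in d.

Lemma rect_eta q : q = (qa q, qb q, qc q, qd q).
Proof. destruct q as [[[a b] c] d]; reflexivity. Qed.

Lemma quarter_geom Q i : rect_ok Q ->
  qa Q <= qa (quarter Q i) /\ qb (quarter Q i) <= qb Q /\ qb (quarter Q i) - qa (quarter Q i) = (qb Q - qa Q)/2 /\
  qc Q <= qc (quarter Q i) /\ qd (quarter Q i) <= qd Q /\ qd (quarter Q i) - qc (quarter Q i) = (qd Q - qc Q)/2.
Proof.
destruct Q as [[[a b] c] d]; simpl. intros [H1 H2].
destruct i as [|[|[|i]]]; simpl; repeat split; lra.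
Qed.

Lemma geom_sum N : sum_f_R0 (fun n => (1/2)^n) N = 2 - (1/2)^N.
Proof. induction N. simpl; lra. rewrite psum_S, IHN. simpl. lra. Qed.

Lemma pow_half_pos n : 0 < (1/2)^n.
Proof. apply pow_lt; lra. Qed.

Definition enl (q : rect) (dl : R) : rect :=
  let '(a, b, c, d) := q in (a - dl, b + dl, c - dl, d + dl).

Lemma K1_core R0 s : rect_ok R0 -> cover_sums (in_rect R0) s -> rect_area R0 <= s.
Proof.
intros HR [q [Hq1 [Hq2 Hq3]]].
destruct (Rle_dec (rect_area R0) s) as [h|h]; auto. exfalso. apply Rnot_le_lt in h.
set (A := rect_area R0) in *.
assert (Hs0 : 0 <= s) by (apply (cover_sums_nonneg (in_rect R0)); exists q; auto).
assert (HA : 0 < A) by lra.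
assert (Hsides : qa R0 < qb R0 /\ qc R0 < qd R0).
{ destruct R0 as [[[a b] c] d]; simpl in *. unfold A in HA; simpl in HA. destruct HR. split.
  destruct (Req_dec a b). subst. nra. lra. destruct (Req_dec c d). subst. nra. lra. }
set (eta := (A - s) / 4).
assert (Heta : 0 < eta) by (unfold eta; lra).
set (dl := fun n => Rmin 1 (eta * (1/2)^n / (2 * ((qb (q n) - qa (q n)) + (qd (q n) - qc (q n))) + 4))).
assert (Hdl : forall n, 0 < dl n /\ dl n <= 1 /\
   dl n * (2 * ((qb (q n) - qa (q n)) + (qd (q n) - qc (q n))) + 4) <= eta * (1/2)^n).
{ intros n. pose proof (Hq1 n) as Hn. rewrite (rect_eta (q n)) in Hn. simpl in Hn.
  pose proof (pow_half_pos n).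
  assert (Hden : 0 < 2 * ((qb (q n) - qa (q n)) + (qd (q n) - qc (q n))) + 4) by lra.
  unfold dl. split; [|split].
  - apply Rmin_glb_lt. lra. apply Rdiv_lt_0_compat; nra.
  - apply Rmin_l.
  - eapply Rle_trans. apply Rmult_le_compat_r. lra. apply Rmin_r.
    right. field. lra. }
set (q' := fun n => enl (q n) (dl n)).
set (be := (s + 2 * eta) / A).
assert (Hbe : be < 1). { unfold be. apply (Rmult_lt_reg_r A). lra. unfold Rdiv. rewrite Rmult_assoc, Rinv_l by lra. unfold eta. lra. }
assert (Hbad0 : bad be q' R0).
{ intros N. change (rect_area R0) with A. unfold be. replace ((s + 2 * eta) / A * A) with (s + 2*eta) by (field; lra).
  assert (Hc : forall n, areaI (q' n) R0 <= rect_area (q n) + eta * (1/2)^n).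
  { intros n. destruct (Hdl n) as [D1 [D2 D3]]. unfold q'. pose proof (Hq1 n) as Hn.
    revert D1 D2 D3 Hn. destruct (q n) as [[[a b] c] d]. destruct R0 as [[[a' b'] c'] d']. simpl.
    intros D1 D2 D3 [Hn1 Hn2].
    pose proof (lenI_le (a - dl n) (b + dl n) a' b' ltac:(lra)).
    pose proof (lenI_le (c - dl n) (d + dl n) c' d' ltac:(lra)).
    pose proof (lenI_nonneg (a - dl n) (b + dl n) a' b').
    pose proof (lenI_nonneg (c - dl n) (d + dl n) c' d').
    eapply Rle_trans. apply Rmult_le_compat; eauto. nra. }
  eapply Rle_trans. apply psum_le. exact Hc. rewrite psum_plus.
  pose proof (infsum_partial_le _ _ (ra_nonneg q Hq1) Hq3 N). unfold ra in H.
  assert (sum_f_R0 (fun n => eta * (1/2)^n) N <= 2 * eta).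
  { replace (fun n => eta * (1/2)^n) with (fun n => (1/2)^n * eta) by (apply functional_extensionality; intros; ring).
    rewrite <- scal_sum, geom_sum. pose proof (pow_half_pos N). nra. }
  lra. }
set (pick := fun Q => epsilon (inhabits Q) (fun Q' => (exists i, (i < 4)%nat /\ Q' = quarter Q i) /\ (rect_ok Q -> bad be q' Q -> bad be q' Q'))).
assert (Hpick : forall Q, (exists i, (i < 4)%nat /\ pick Q = quarter Q i) /\ (rect_ok Q -> bad be q' Q -> bad be q' (pick Q))).
{ intros Q. unfold pick. apply epsilon_spec.
  destruct (classic (rect_ok Q /\ bad be q' Q)) as [[H1 H2]|H].
  - destruct (bad_quarter be q' Q H1 H2) as [i [Hi Hb]]. exists (quarter Q i). split; eauto.
  - exists (quarter Q 0). split. exists 0%nat; split; auto. intros. exfalso; auto. }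
set (Qk := fun k => Nat.iter k pick R0).
assert (HQ : forall k, rect_ok (Qk k) /\ bad be q' (Qk k) /\
   qa R0 <= qa (Qk k) /\ qb (Qk k) <= qb R0 /\ qb (Qk k) - qa (Qk k) = (qb R0 - qa R0) * (1/2)^k /\
   qc R0 <= qc (Qk k) /\ qd (Qk k) <= qd R0 /\ qd (Qk k) - qc (Qk k) = (qd R0 - qc R0) * (1/2)^k /\
   qa (Qk k) <= qa (Qk (S k)) /\ qb (Qk (S k)) <= qb (Qk k) /\
   qc (Qk k) <= qc (Qk (S k)) /\ qd (Qk (S k)) <= qd (Qk k)).
{ assert (Hstep : forall Q, rect_ok Q -> rect_ok (pick Q) /\
     qa Q <= qa (pick Q) /\ qb (pick Q) <= qb Q /\ qb (pick Q) - qa (pick Q) = (qb Q - qa Q)/2 /\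
     qc Q <= qc (pick Q) /\ qd (pick Q) <= qd Q /\ qd (pick Q) - qc (pick Q) = (qd Q - qc Q)/2).
  { intros Q HQ. destruct (Hpick Q) as [[i [_ Hi]] _]. rewrite Hi.
    pose proof (quarter_geom Q i HQ) as G. split; [|exact G].
    rewrite (rect_eta (quarter Q i)). simpl.
    rewrite (rect_eta Q) in HQ. simpl in HQ. lra. }
  induction k.
  - simpl. destruct (Hstep R0 HR) as [S1 [S2 [S3 [S4 [S5 [S6 S7]]]]]].
    split; [exact HR|]. split; [exact Hbad0|].
    pose proof HR as HR'. rewrite (rect_eta R0) in HR'. simpl in HR'.
    repeat split; try lra; auto.
  - destruct IHk as [I1 [I2 [I3 [I4 [I5 [I6 [I7 [I8 _]]]]]]]].
    assert (E : Qk (S k) = pick (Qk k)) by reflexivity.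
    destruct (Hstep (Qk k) I1) as [S1 [S2 [S3 [S4 [S5 [S6 S7]]]]]].
    rewrite <- E in *.
    destruct (Hstep (Qk (S k)) S1) as [T1 [T2 [T3 [T4 [T5 [T6 T7]]]]]].
    assert (E' : Qk (S (S k)) = pick (Qk (S k))) by reflexivity. rewrite <- E' in *.
    split; auto. split. rewrite E. apply (Hpick (Qk k)); auto.
    simpl pow. repeat split; try lra. }
assert (Hcross : forall j k, qa (Qk j) <= qb (Qk k) /\ qc (Qk j) <= qd (Qk k)).
{ assert (Ma : forall j k, (j <= k)%nat -> qa (Qk j) <= qa (Qk k) /\ qc (Qk j) <= qc (Qk k) /\ qb (Qk k) <= qb (Qk j) /\ qd (Qk k) <= qd (Qk j)).
  { intros j k H. induction H. lra. destruct (HQ m) as [_ [_ [_ [_ [_ [_ [_ [_ [M1 [M2 [M3 M4]]]]]]]]]]]. lra. }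
  intros j k. destruct (HQ j) as [Hj _]. destruct (HQ k) as [Hk _].
  rewrite (rect_eta (Qk j)) in Hj; rewrite (rect_eta (Qk k)) in Hk; simpl in Hj, Hk.
  destruct (Nat.le_ge_cases j k) as [H|H]; destruct (Ma _ _ H); lra. }
destruct (completeness (fun x => exists k, x = qa (Qk k))) as [px [Hpx1 Hpx2]].
{ exists (qb (Qk 0%nat)). intros x [k ->]. apply Hcross. }
{ exists (qa (Qk 0%nat)). exists 0%nat. auto. }
destruct (completeness (fun x => exists k, x = qc (Qk k))) as [py [Hpy1 Hpy2]].
{ exists (qd (Qk 0%nat)). intros x [k ->]. apply Hcross. }
{ exists (qc (Qk 0%nat)). exists 0%nat. auto. }
assert (Hp : forall k, qa (Qk k) <= px <= qb (Qk k) /\ qc (Qk k) <= py <= qd (Qk k)).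
{ intros k. split; split.
  apply Hpx1. eauto. apply Hpx2. intros x [j ->]. apply Hcross.
  apply Hpy1. eauto. apply Hpy2. intros x [j ->]. apply Hcross. }
assert (HpR : in_rect R0 (px, py)).
{ destruct (Hp 0%nat) as [[A1 A2] [A3 A4]]. simpl in A1, A2, A3, A4.
  rewrite (rect_eta R0). simpl. lra. }
destruct (Hq2 _ HpR) as [m Hm].
destruct (Hdl m) as [Dm _].
set (W := (qb R0 - qa R0) + (qd R0 - qc R0)).
destruct (pow_lt_1_zero (1/2) ltac:(rewrite Rabs_pos_eq; lra) (dl m / W)) as [k Hk].
{ unfold W. apply Rdiv_lt_0_compat; lra. }
specialize (Hk k (le_n _)). rewrite Rabs_pos_eq in Hk by (apply Rlt_le, pow_half_pos).
assert (Hw : (qb R0 - qa R0) * (1/2)^k <= dl m /\ (qd R0 - qc R0) * (1/2)^k <= dl m).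
{ assert (W * (1/2)^k < dl m). { apply (Rmult_lt_reg_r (/W)). apply Rinv_0_lt_compat. unfold W; lra.
    replace (W * (1/2)^k * /W) with ((1/2)^k) by (field; unfold W; lra). exact Hk. }
  pose proof (pow_half_pos k). unfold W in H. split; nra. }
destruct (HQ k) as [K1 [K2 [K3 [K4 [K5 [K6 [K7 [K8 _]]]]]]]].
destruct (Hp k) as [[P1 P2] [P3 P4]].
assert (Hfull : areaI (q' m) (Qk k) = rect_area (Qk k)).
{ unfold q'. revert Hm. rewrite (rect_eta (q m)). rewrite (rect_eta (Qk k)). simpl. intros [[M1 M2] [M3 M4]].
  rewrite (rect_eta (Qk k)) in K1. simpl in K1. destruct K1.
  rewrite !lenI_full; auto; lra. }
specialize (K2 m).
pose proof (psum_ge_last (fun n => areaI (q' n) (Qk k)) m (fun n => areaI_nonneg _ _)) as L. simpl in L.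
rewrite Hfull in L.
assert (0 < rect_area (Qk k)).
{ rewrite (rect_eta (Qk k)). simpl. pose proof (pow_half_pos k).
  assert (0 < (qb R0 - qa R0) * (1/2)^k) by (apply Rmult_lt_0_compat; lra).
  assert (0 < (qd R0 - qc R0) * (1/2)^k) by (apply Rmult_lt_0_compat; lra).
  rewrite K5, K8. apply Rmult_lt_0_compat; lra. }
nra.
Qed.

Lemma area_rect R0 : rect_ok R0 -> rect_area R0 <= area (in_rect R0).
Proof.
intros HR. assert (Hb : bounded2 (in_rect R0)).
{ apply (box_bounded _ (Rabs (qa R0) + Rabs (qb R0) + Rabs (qc R0) + Rabs (qd R0))).
  intros [x y]. rewrite (rect_eta R0). simpl. intros [[H1 H2] [H3 H4]].
  pose proof (Rabs_pos (qa R0)); pose proof (Rabs_pos (qb R0)); pose proof (Rabs_pos (qc R0)); pose proof (Rabs_pos (qd R0)).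
  split; unfold Rabs at 1; destruct Rcase_abs;
  pose proof (Rle_abs (qa R0)); pose proof (Rle_abs (qb R0)); pose proof (Rle_abs (qc R0)); pose proof (Rle_abs (qd R0));
  pose proof (Rle_abs (- qa R0)); pose proof (Rle_abs (- qb R0)); pose proof (Rle_abs (- qc R0)); pose proof (Rle_abs (- qd R0));
  rewrite !Rabs_Ropp in *; lra. }
apply (area_spec _ Hb). intros s Hs. apply K1_core; auto.
Qed.

Definition reflq (p : pt) (q : rect) : rect :=
  let '(a, b, c, d) := q in (2 * fst p - b, 2 * fst p - a, 2 * snd p - d, 2 * snd p - c).

Lemma area_refl X Y p : bounded2 X -> bounded2 Y ->
  (forall z, X z -> Y (2 * fst p - fst z, 2 * snd p - snd z)) -> area X <= area Y.
Proof.
intros HX HY H. apply (area_spec Y HY). intros s [q [Hq1 [Hq2 Hq3]]].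
apply area_le_cover; auto. exists (fun n => reflq p (q n)). split; [|split].
- intros n. pose proof (Hq1 n). destruct (q n) as [[[a b] c] d]. simpl in *. lra.
- intros z Hz. destruct (Hq2 _ (H z Hz)) as [n Hn]. exists n. revert Hn.
  destruct (q n) as [[[a b] c] d]. simpl. lra.
- replace (fun n => rect_area (reflq p (q n))) with (fun n => rect_area (q n)); auto.
  apply functional_extensionality. intros n. destruct (q n) as [[[a b] c] d]. simpl. ring.
Qed.

Fixpoint psumL (E : pt -> Prop) (L : list rect) : R :=
  match L with nil => 0 | q :: L' => area (inter E q) + psumL (minus E q) L' end.
Fixpoint remL (E : pt -> Prop) (L : list rect) : pt -> Prop :=
  match L with nil => E | q :: L' => remL (minus E q) L' end.

Lemma psum_lower L : forall E, bounded2 E -> Forall rect_ok L -> psumL E L + area (remL E L) <= area E.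
Proof.
induction L as [|q L IH]; intros E HE HL; simpl. lra.
inversion HL; subst.
assert (HEm : bounded2 (minus E q)) by (apply (bounded_sub _ _ HE); intros z [h _]; auto).
pose proof (IH (minus E q) HEm H2). pose proof (area_CR E q HE H1). lra.
Qed.

Lemma psum_upper L : forall E, bounded2 E -> area E <= psumL E L + area (remL E L).
Proof.
induction L as [|q L IH]; intros E HE; simpl. lra.
assert (HEm : bounded2 (minus E q)) by (apply (bounded_sub _ _ HE); intros z [h _]; auto).
assert (HEi : bounded2 (inter E q)) by (apply (bounded_sub _ _ HE); intros z [h _]; auto).
pose proof (IH (minus E q) HEm).
assert (area E <= area (union2 (inter E q) (minus E q))).
{ apply area_mono. apply bounded_union; auto. intros z Hz. unfold union2, inter, minus.
  destruct (classic (in_rect q z)); auto. }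
pose proof (area_subadd _ _ HEi HEm). lra.
Qed.

Lemma psum_sep L : forall X Y, bounded2 X -> bounded2 Y ->
  (forall q, In q L -> (forall x, X x -> ~ in_rect q x) \/ (forall y, Y y -> ~ in_rect q y)) ->
  psumL X L + psumL Y L <= psumL (union2 X Y) L.
Proof.
induction L as [|q L IH]; intros X Y HX HY HL; simpl. lra.
assert (Hm : minus (union2 X Y) q = union2 (minus X q) (minus Y q)).
{ apply set_ext. intros z. unfold minus, union2. tauto. }
rewrite Hm.
assert (HXY : bounded2 (union2 X Y)) by (apply bounded_union; auto).
assert (B1 : bounded2 (minus X q)) by (apply (bounded_sub _ _ HX); intros z [h _]; auto).
assert (B2 : bounded2 (minus Y q)) by (apply (bounded_sub _ _ HY); intros z [h _]; auto).
assert (HL' : forall q', In q' L -> (forall x, minus X q x -> ~ in_rect q' x) \/ (forall y, minus Y q y -> ~ in_rect q' y)).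
{ intros q' h. destruct (HL q' (or_intror h)) as [a|a]; [left|right]; intros x [hx _]; apply a; auto. }
pose proof (IH (minus X q) (minus Y q) B1 B2 HL').
destruct (HL q (or_introl eq_refl)) as [H0|H0].
- rewrite (area_empty (inter X q)) by (intros z [h1 h2]; apply (H0 z); auto).
  assert (area (inter Y q) <= area (inter (union2 X Y) q)).
  { apply area_mono. apply (bounded_sub _ _ HXY). intros z [h _]; auto.
    intros z [h1 h2]. split; auto. right; auto. }
  lra.
- rewrite (area_empty (inter Y q)) by (intros z [h1 h2]; apply (H0 z); auto).
  assert (area (inter X q) <= area (inter (union2 X Y) q)).
  { apply area_mono. apply (bounded_sub _ _ HXY). intros z [h _]; auto.
    intros z [h1 h2]. split; auto. left; auto. }
  lra.
Qed.

Lemma remL_char L : forall E x, remL E L x -> E x /\ forall q, In q L -> ~ in_rect q x.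
Proof.
induction L as [|q L IH]; intros E x H; simpl in *. split; auto.
destruct (IH _ _ H) as [[h1 h2] h3]. split; auto. intros q' [<-|h]; auto.
Qed.

Lemma exists_cell h x0 x k : 0 < h -> (1 <= k)%nat -> x0 <= x <= x0 + INR k * h ->
  exists i, (i < k)%nat /\ x0 + INR i * h <= x <= x0 + INR (S i) * h.
Proof.
intros Hh Hk. induction Hk; intros Hx.
- exists 0%nat. split. lia. simpl in *. lra.
- destruct (Rle_dec x (x0 + INR m * h)).
  + assert (Hm : x0 <= x <= x0 + INR m * h) by lra. destruct (IHHk Hm) as [i [Hi Hi']]. exists i. split; [lia|auto].
  + exists m. split. lia. lra.
Qed.

Definition cell (M h : R) (i j : nat) : rect :=
  (-M + INR i * h, -M + INR (S i) * h, -M + INR j * h, -M + INR (S j) * h).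
Definition grid M h k := flat_map (fun i => map (fun j => cell M h i j) (seq 0 k)) (seq 0 k).

Lemma area_sep X Y eps : bounded2 X -> bounded2 Y -> 0 < eps ->
  (forall x y, X x -> Y y -> eps <= dist2 x y) -> area X + area Y <= area (union2 X Y).
Proof.
intros HX HY He Hsep.
assert (HXY : bounded2 (union2 X Y)) by (apply bounded_union; auto).
destruct (bounded_box _ HXY) as [M0 [HM0 HM]].
set (M := M0 + 1).
destruct (INR_archimed (eps/4) (2*M)) as [k Hk]. lra.
assert (Hk1 : (1 <= k)%nat). { destruct k. simpl in Hk. unfold M in Hk. lra. lia. }
assert (HkR : 0 < INR k) by (apply lt_0_INR; lia).
set (h := 2 * M / INR k).
assert (Hh : 0 < h) by (unfold h, M; apply Rdiv_lt_0_compat; lra).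
assert (Hh2 : h < eps / 4). { unfold h. apply (Rmult_lt_reg_r (INR k)); auto.
  unfold Rdiv. rewrite Rmult_assoc, Rinv_l by lra. lra. }
assert (HkM : -M + INR k * h = M) by (unfold h; field; lra).
set (L := grid M h k).
assert (HL : Forall rect_ok L).
{ apply Forall_forall. intros q Hq. unfold L, grid in Hq. apply in_flat_map in Hq. destruct Hq as [i [_ Hq]].
  apply in_map_iff in Hq. destruct Hq as [j [<- _]]. unfold cell, rect_ok. rewrite !S_INR. lra. }
assert (Hcov : forall z, union2 X Y z -> exists q, In q L /\ in_rect q z).
{ intros z Hz. destruct (HM z Hz) as [H1 H2]. apply abs_le_b in H1. apply abs_le_b in H2.
  destruct (exists_cell h (-M) (fst z) k Hh Hk1) as [i [Hi Hi']]. unfold M in *; lra.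
  destruct (exists_cell h (-M) (snd z) k Hh Hk1) as [j [Hj Hj']]. unfold M in *; lra.
  exists (cell M h i j). split.
  - unfold L, grid. apply in_flat_map. exists i. split. apply in_seq; lia.
    apply in_map_iff. exists j. split; auto. apply in_seq; lia.
  - unfold cell. destruct z; simpl in *. lra. }
assert (Hsmall : forall q, In q L -> forall x y, in_rect q x -> in_rect q y -> dist2 x y < eps).
{ intros q Hq x y Hx Hy. unfold L, grid in Hq. apply in_flat_map in Hq. destruct Hq as [i [_ Hq]].
  apply in_map_iff in Hq. destruct Hq as [j [<- _]]. unfold cell, in_rect in Hx, Hy. rewrite !S_INR in Hx, Hy.
  unfold dist2. eapply Rle_lt_trans. apply norm_le_abs.
  assert (Rabs (fst x - fst y) <= h) by (unfold Rabs; destruct Rcase_abs; lra).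
  assert (Rabs (snd x - snd y) <= h) by (unfold Rabs; destruct Rcase_abs; lra). lra. }
pose proof (psum_lower L (union2 X Y) HXY HL).
pose proof (area_ge0 (remL (union2 X Y) L) ltac:(eapply bounded_sub; [exact HXY| intros z hz; apply (remL_char L _ _ hz)])).
pose proof (psum_sep L X Y HX HY) as Hs.
assert (psumL X L + psumL Y L <= psumL (union2 X Y) L).
{ apply Hs. intros q Hq. destruct (classic (exists x, X x /\ in_rect q x)) as [[x [Hx Hxq]]|Hn].
  - right. intros y Hy Hyq. pose proof (Hsep x y Hx Hy). pose proof (Hsmall q Hq x y Hxq Hyq). lra.
  - left. intros x Hx Hxq. apply Hn. eauto. }
pose proof (psum_upper L X HX). pose proof (psum_upper L Y HY).
rewrite (area_empty (remL X L)) in *.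
rewrite (area_empty (remL Y L)) in *.
lra.
- intros z Hz. destruct (remL_char L _ _ Hz) as [h1 h2]. destruct (Hcov z (or_intror h1)) as [q [Hq1 Hq2]]. apply (h2 q); auto.
- intros z Hz. destruct (remL_char L _ _ Hz) as [h1 h2]. destruct (Hcov z (or_introl h1)) as [q [Hq1 Hq2]]. apply (h2 q); auto.
Qed.

Fixpoint sumN (g : nat -> R) (n : nat) : R := match n with O => 0 | S n => sumN g n + g n end.

Lemma sumN_le g h n : (forall i, (i < n)%nat -> g i <= h i) -> sumN g n <= sumN h n.
Proof. induction n; intros H; simpl. lra. pose proof (H n ltac:(lia)). assert (sumN g n <= sumN h n) by (apply IHn; intros; apply H; lia). lra. Qed.

Lemma sumN_tele g n : sumN (fun i => g (S i) - g i) n = g n - g 0%nat.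
Proof. induction n; simpl. lra. rewrite IHn. lra. Qed.

Lemma sumN_shift h n : sumN (fun i => h (S i)) n = sumN h n + h n - h 0%nat.
Proof. induction n; simpl. lra. rewrite IHn. lra. Qed.

Lemma sumN_scal a g n : sumN (fun i => a * g i) n = a * sumN g n.
Proof. induction n; simpl. lra. rewrite IHn. lra. Qed.

Lemma sumN_plus g h n : sumN (fun i => g i + h i) n = sumN g n + sumN h n.
Proof. induction n; simpl. lra. rewrite IHn. lra. Qed.

Lemma sumN_ext g h n : (forall i, (i < n)%nat -> g i = h i) -> sumN g n = sumN h n.
Proof. intros H. apply Rle_antisym; apply sumN_le; intros; rewrite H; auto; lra. Qed.

Module TrigM.
Import Coquelicot.
Lemma G_der c : derivable_pt_lim (fun x => x/2 + sin (2*x)/4) c (cos c ^ 2).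
Proof. apply is_derive_Reals. auto_derive. auto. rewrite cos_2a_cos. field. Qed.
End TrigM.

Lemma cos_mono a b : 0 <= a -> a <= b -> b <= PI -> cos b <= cos a.
Proof. intros. destruct (Req_dec a b). subst; lra. left. apply cos_decreasing_1; lra. Qed.

Lemma sin_diff a b : 0 <= a -> a <= b -> b <= PI/2 -> (b - a) * cos b <= sin b - sin a.
Proof.
intros. pose proof PI_RGT_0. destruct (Req_dec a b). subst. lra.
destruct (MVT_cor2 sin cos a b ltac:(lra) (fun c _ => derivable_pt_lim_sin c)) as [c [Hc1 Hc2]].
rewrite Hc1. pose proof (cos_mono c b ltac:(lra) ltac:(lra) ltac:(lra)). nra.
Qed.

Lemma G_diff a b : 0 <= a -> a <= b -> b <= PI/2 ->
  (b/2 + sin (2*b)/4) - (a/2 + sin(2*a)/4) <= (b - a) * cos a ^ 2.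
Proof.
intros. pose proof PI_RGT_0. destruct (Req_dec a b). subst. lra.
destruct (MVT_cor2 (fun x => x/2 + sin (2*x)/4) (fun c => cos c ^ 2) a b ltac:(lra) (fun c _ => TrigM.G_der c)) as [c [Hc1 Hc2]].
rewrite Hc1. pose proof (cos_mono a c ltac:(lra) ltac:(lra) ltac:(lra)).
pose proof (cos_ge_0 c ltac:(lra) ltac:(lra)).
assert (cos c * cos c <= cos a * cos a) by (apply Rmult_le_compat; lra).
simpl. rewrite !Rmult_1_r. rewrite (Rmult_comm (cos c * cos c)). apply Rmult_le_compat_l; lra.
Qed.

Definition th (N i : nat) := INR i * (PI/2) / INR N.

Lemma th_range N i : (1 <= N)%nat -> (i <= N)%nat -> 0 <= th N i <= PI/2.
Proof.
intros HN Hi. unfold th. pose proof PI_RGT_0. assert (0 < INR N) by (apply lt_0_INR; lia).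
apply le_INR in Hi. pose proof (pos_INR i). split.
apply Rmult_le_pos. nra. left; apply Rinv_0_lt_compat; lra.
apply (Rmult_le_reg_r (INR N)). lra. unfold Rdiv. rewrite Rmult_assoc, Rinv_l by lra. nra.
Qed.

Lemma th_step N i : (1 <= N)%nat -> th N (S i) - th N i = PI / 2 / INR N.
Proof. intros. unfold th. rewrite S_INR. assert (0 < INR N) by (apply lt_0_INR; lia). field. lra. Qed.

Lemma th_N N : (1 <= N)%nat -> th N N = PI/2.
Proof. intros. unfold th. assert (0 < INR N) by (apply lt_0_INR; lia). field. lra. Qed.

Lemma th_0 N : th N 0 = 0.
Proof. unfold th. simpl. lra. Qed.

Lemma trig_sum N : (1 <= N)%nat ->
  PI/4 - PI/2/INR N <= sumN (fun i => cos (th N (S i)) * (sin (th N (S i)) - sin (th N i))) N.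
Proof.
intros HN. set (D := PI/2/INR N). pose proof PI_RGT_0.
assert (HD : 0 < D). { unfold D. assert (0 < INR N) by (apply lt_0_INR; lia). apply Rdiv_lt_0_compat; lra. }
assert (H1 : sumN (fun i => D * cos (th N (S i)) ^ 2) N <= sumN (fun i => cos (th N (S i)) * (sin (th N (S i)) - sin (th N i))) N).
{ apply sumN_le. intros i Hi. destruct (th_range N i HN ltac:(lia)). destruct (th_range N (S i) HN ltac:(lia)).
  pose proof (th_step N i HN). fold D in H4.
  pose proof (sin_diff (th N i) (th N (S i)) ltac:(lra) ltac:(lra) ltac:(lra)).
  rewrite H4 in H5. pose proof (cos_ge_0 (th N (S i)) ltac:(lra) ltac:(lra)).
  simpl. rewrite Rmult_1_r. replace (D * (cos (th N (S i)) * cos (th N (S i)))) with (cos (th N (S i)) * (D * cos (th N (S i)))) by ring.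
  apply Rmult_le_compat_l; lra. }
set (G := fun x => x/2 + sin (2*x)/4).
assert (H2 : sumN (fun i => G (th N (S i)) - G (th N i)) N <= sumN (fun i => D * cos (th N i) ^ 2) N).
{ apply sumN_le. intros i Hi. destruct (th_range N i HN ltac:(lia)). destruct (th_range N (S i) HN ltac:(lia)).
  pose proof (th_step N i HN) as H5. change (PI/2/INR N) with D in H5. replace D with (th N (S i) - th N i) by (rewrite th_step; auto). unfold G. apply G_diff; lra. }
rewrite (sumN_tele (fun i => G (th N i))) in H2.
rewrite th_N, th_0 in H2 by auto. unfold G in H2.
replace (2 * (PI/2)) with PI in H2 by field. rewrite sin_PI in H2. replace (2*0) with 0 in H2 by ring. rewrite sin_0 in H2.
rewrite (sumN_shift (fun i => D * cos (th N i) ^ 2)) in H1. rewrite th_N, th_0, cos_PI2, cos_0 in H1 by auto.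
lra.
Qed.

Lemma rect_bounded q : bounded2 (in_rect q).
Proof.
apply (box_bounded _ (Rabs (qa q) + Rabs (qb q) + Rabs (qc q) + Rabs (qd q))).
intros [x y]. rewrite (rect_eta q). simpl. intros [[H1 H2] [H3 H4]].
pose proof (Rabs_pos (qa q)); pose proof (Rabs_pos (qb q)); pose proof (Rabs_pos (qc q)); pose proof (Rabs_pos (qd q)).
split; unfold Rabs at 1; destruct Rcase_abs;
pose proof (Rle_abs (qa q)); pose proof (Rle_abs (qb q)); pose proof (Rle_abs (qc q)); pose proof (Rle_abs (qd q));
pose proof (Rle_abs (- qa q)); pose proof (Rle_abs (- qb q)); pose proof (Rle_abs (- qc q)); pose proof (Rle_abs (- qd q));
rewrite !Rabs_Ropp in *; lra.
Qed.

Fixpoint unionF (f : nat -> rect) (n : nat) : pt -> Prop :=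
  match n with O => fun _ => False | S n => fun z => unionF f n z \/ in_rect (f n) z end.

Lemma unionF_bounded f n : bounded2 (unionF f n).
Proof.
induction n; simpl. exists 0. intros x [].
apply (bounded_union (unionF f n) (in_rect (f n))); auto. apply rect_bounded.
Qed.

Lemma unionF_ex f n z : unionF f n z -> exists i, (i < n)%nat /\ in_rect (f i) z.
Proof.
induction n; simpl. intros []. intros [h|h].
destruct (IHn h) as [i [Hi Hi']]. exists i. split; auto; lia. exists n. split; auto.
Qed.

Lemma iter_rects f n : (forall i, (i < n)%nat -> rect_ok (f i)) ->
  (forall i j, (i < j)%nat -> (j < n)%nat -> forall z, in_rect (f i) z -> ~ in_rect (f j) z) ->
  sumN (fun i => rect_area (f i)) n <= area (unionF f n).
Proof.
induction n; intros Hok Hd; simpl. rewrite area_empty; [lra|intros x []].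
assert (IH : sumN (fun i => rect_area (f i)) n <= area (unionF f n)).
{ apply IHn. intros; apply Hok; lia. intros i j h1 h2. apply Hd; auto; lia. }
pose proof (area_CR (unionF f (S n)) (f n) (unionF_bounded f (S n)) (Hok n ltac:(lia))) as HC.
assert (A1 : area (in_rect (f n)) <= area (inter (unionF f (S n)) (f n))).
{ apply area_mono. apply (bounded_sub _ _ (unionF_bounded f (S n))). intros z [h _]; auto.
  intros z h. split; auto. simpl. right; auto. }
assert (A2 : area (unionF f n) <= area (minus (unionF f (S n)) (f n))).
{ apply area_mono. apply (bounded_sub _ _ (unionF_bounded f (S n))). intros z [h _]; auto.
  intros z h. split. simpl; left; auto.
  destruct (unionF_ex f n z h) as [i [Hi Hi']]. apply (Hd i n); auto. }
pose proof (area_rect (f n) (Hok n ltac:(lia))).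
change (area (fun z => unionF f n z \/ in_rect (f n) z)) with (area (unionF f (S n))). lra.
Qed.

Definition odisc (p : pt) (t : R) : pt -> Prop := fun z => dist2 p z < t.

Lemma odisc_bounded p t : bounded2 (odisc p t).
Proof.
apply (box_bounded _ (Rabs (fst p) + Rabs (snd p) + Rabs t)). intros z Hz. unfold odisc, dist2 in Hz.
pose proof (abs_le_norm (fst p - fst z) (snd p - snd z)).
pose proof (abs_le_norm (snd p - snd z) (fst p - fst z)). rewrite Rplus_comm in H0.
pose proof (Rle_abs t).
assert (Rabs (fst z) <= Rabs (fst p) + Rabs (fst p - fst z)).
{ unfold Rabs; repeat destruct Rcase_abs; lra. }
assert (Rabs (snd z) <= Rabs (snd p) + Rabs (snd p - snd z)).
{ unfold Rabs; repeat destruct Rcase_abs; lra. }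
pose proof (Rabs_pos (fst p)); pose proof (Rabs_pos (snd p)). split; lra.
Qed.

Lemma norm_lt a b t : 0 < t -> a^2 + b^2 < t^2 -> sqrt (a^2 + b^2) < t.
Proof.
intros Ht H. rewrite <- (sqrt_pow2 t) by lra. apply sqrt_lt_1_alt. split; [nra|auto].
Qed.

Lemma sq_le a w : -w <= a <= w -> a^2 <= w^2.
Proof. intros. nra. Qed.

Lemma sin_th_le N i j : (1 <= N)%nat -> (i <= j)%nat -> (j <= N)%nat -> sin (th N i) <= sin (th N j).
Proof.
intros HN Hij HjN. destruct (Nat.eq_dec i j). subst; lra.
destruct (th_range N i HN ltac:(lia)). destruct (th_range N j HN HjN).
left. apply sin_increasing_1; try lra.
unfold th. assert (0 < INR N) by (apply lt_0_INR; lia). pose proof PI_RGT_0.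
apply Rmult_lt_compat_r. apply Rinv_0_lt_compat; lra. apply Rmult_lt_compat_r. lra. apply lt_INR; lia.
Qed.

Lemma sin_th_lt N i : (1 <= N)%nat -> (i < N)%nat -> sin (th N i) < sin (th N (S i)).
Proof.
intros HN Hi.
destruct (th_range N i HN ltac:(lia)). destruct (th_range N (S i) HN ltac:(lia)).
apply sin_increasing_1; try lra. pose proof (th_step N i HN).
assert (0 < INR N) by (apply lt_0_INR; lia). pose proof PI_RGT_0.
assert (0 < PI/2/INR N) by (apply Rdiv_lt_0_compat; lra). lra.
Qed.

Lemma sumN_add g n m : sumN g (n + m) = sumN g n + sumN (fun i => g (n + i)%nat) m.
Proof. induction m; simpl. rewrite Nat.add_0_r. lra. rewrite Nat.add_succ_r. simpl. rewrite IHm. lra. Qed.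

Lemma disc_area_N p t N : 0 < t -> (2 <= N)%nat -> PI * t^2 * (1 - 5 / INR N) <= area (odisc p t).
Proof.
intros Ht HN. pose proof PI_RGT_0.
assert (HNR : 2 <= INR N) by (replace 2 with (INR 2) by (simpl; lra); apply le_INR; auto).
set (g := 1 / INR N).
assert (Hg : 0 < g <= 1/2). { unfold g. split. apply Rdiv_lt_0_compat; lra.
  apply (Rmult_le_reg_r (INR N)). lra. unfold Rdiv. rewrite Rmult_1_l, Rinv_l by lra. lra. }
set (T := t * (1 - g)).
assert (HT : 0 < T < t) by (unfold T; split; nra).
set (Y := fun i => T * sin (th N i)). set (W := fun i => T * cos (th N i)).
set (top := fun i => (fst p - W (S i), fst p + W (S i), snd p + Y i + g * (Y (S i) - Y i), snd p + Y (S i))).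
set (bot := fun i => (fst p - W (S i), fst p + W (S i), snd p - Y (S i), snd p - Y i - g * (Y (S i) - Y i))).
set (f := fun i => if Nat.ltb i N then top i else bot (i - N)%nat).
assert (HN1 : (1 <= N)%nat) by lia.
assert (Hfacts : forall i, (i < N)%nat -> 0 <= Y i /\ Y i < Y (S i) /\ 0 <= W (S i) /\
    W (S i) ^ 2 + Y (S i) ^2 = T^2).
{ intros i Hi. destruct (th_range N i HN1 ltac:(lia)). destruct (th_range N (S i) HN1 ltac:(lia)).
  unfold Y, W. split; [|split; [|split]].
  - apply Rmult_le_pos. lra. apply sin_ge_0; lra.
  - apply Rmult_lt_compat_l. lra. apply sin_th_lt; auto.
  - apply Rmult_le_pos. lra. apply cos_ge_0; lra.
  - pose proof (sin2_cos2 (th N (S i))). unfold Rsqr in H4. nra. }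
assert (HYmono : forall i j, (i <= j)%nat -> (j <= N)%nat -> Y i <= Y j).
{ intros i j h1 h2. unfold Y. apply Rmult_le_compat_l. lra. apply sin_th_le; auto. }
assert (Hok : forall i, (i < 2 * N)%nat -> rect_ok (f i)).
{ intros i Hi. unfold f. destruct (Nat.ltb_spec i N).
  - destruct (Hfacts i H0) as [F1 [F2 [F3 F4]]]. unfold top; simpl. split; nra.
  - destruct (Hfacts (i - N)%nat ltac:(lia)) as [F1 [F2 [F3 F4]]]. unfold bot; simpl. split; nra. }
assert (Hdisj : forall i j, (i < j)%nat -> (j < 2 * N)%nat -> forall z, in_rect (f i) z -> ~ in_rect (f j) z).
{ intros i j Hij Hj z Hi Hjz. unfold f in Hi, Hjz.
  destruct (Nat.ltb_spec i N); destruct (Nat.ltb_spec j N).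
  - unfold top in Hi, Hjz; simpl in Hi, Hjz.
    destruct (Hfacts j H1) as [F1 [F2 [F3 F4]]].
    pose proof (HYmono (S i) j ltac:(lia) ltac:(lia)). nra.
  - unfold top in Hi; unfold bot in Hjz; simpl in Hi, Hjz.
    destruct (Hfacts i H0) as [F1 [F2 [F3 F4]]].
    destruct (Hfacts (j - N)%nat ltac:(lia)) as [G1 [G2 [G3 G4]]]. nra.
  - lia.
  - unfold bot in Hi, Hjz; simpl in Hi, Hjz.
    destruct (Hfacts (j - N)%nat ltac:(lia)) as [F1 [F2 [F3 F4]]].
    pose proof (HYmono (S (i - N)) (j - N)%nat ltac:(lia) ltac:(lia)). nra. }
pose proof (iter_rects f (2 * N) Hok Hdisj) as Hit.
assert (Hsub : area (unionF f (2 * N)) <= area (odisc p t)).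
{ apply area_mono. apply odisc_bounded. intros z Hz. destruct (unionF_ex f _ z Hz) as [i [Hi Hzi]].
  unfold odisc, dist2. apply norm_lt; auto. unfold f in Hzi. destruct (Nat.ltb_spec i N).
  - destruct (Hfacts i H0) as [F1 [F2 [F3 F4]]]. unfold top in Hzi; simpl in Hzi.
    assert (0 <= g * (Y (S i) - Y i)) by nra.
    assert ((fst p - fst z)^2 <= W (S i) ^2) by (apply sq_le; lra).
    assert ((snd p - snd z)^2 <= Y (S i) ^2) by (apply sq_le; lra). nra.
  - destruct (Hfacts (i - N)%nat ltac:(lia)) as [F1 [F2 [F3 F4]]]. unfold bot in Hzi; simpl in Hzi.
    assert (0 <= g * (Y (S (i - N)) - Y (i - N)%nat)) by nra.
    assert ((fst p - fst z)^2 <= W (S (i - N)) ^2) by (apply sq_le; lra).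
    assert ((snd p - snd z)^2 <= Y (S (i - N)) ^2) by (apply sq_le; lra). nra. }
assert (Hsum : sumN (fun i => rect_area (f i)) (2 * N) =
   4 * T^2 * (1 - g) * sumN (fun i => cos (th N (S i)) * (sin (th N (S i)) - sin (th N i))) N).
{ replace (2 * N)%nat with (N + N)%nat by lia. rewrite sumN_add.
  rewrite (sumN_ext _ (fun i => 2 * T^2 * (1 - g) * (cos (th N (S i)) * (sin (th N (S i)) - sin (th N i))))).
  rewrite (sumN_ext (fun i => rect_area (f (N + i)%nat)) (fun i => 2 * T^2 * (1 - g) * (cos (th N (S i)) * (sin (th N (S i)) - sin (th N i))))).
  rewrite sumN_scal. ring.
  - intros i Hi. unfold f. destruct (Nat.ltb_spec (N + i) N). lia.
    replace (N + i - N)%nat with i by lia. unfold bot, Y, W. simpl. ring.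
  - intros i Hi. unfold f. destruct (Nat.ltb_spec i N). 2: lia.
    unfold top, Y, W. simpl. ring. }
pose proof (trig_sum N HN1) as Htr.
assert (Hfin : PI * t^2 * (1 - 5 / INR N) <= 4 * T^2 * (1 - g) * (PI/4 - PI/2/INR N)).
{ replace (5 / INR N) with (5 * g) by (unfold g; field; lra).
  replace (PI/2/INR N) with (PI/2 * g) by (unfold g; field; lra).
  unfold T. assert (0 < t^2) by nra.
  assert (1 - 5*g <= (1-g)^3 * (1 - 2*g)) by nra.
  replace (4 * (t * (1 - g)) ^ 2 * (1 - g) * (PI / 4 - PI / 2 * g)) with (PI * t^2 * ((1-g)^3 * (1 - 2*g))) by field.
  apply Rmult_le_compat_l. nra. lra. }
assert (0 <= 4 * T^2 * (1 - g)) by nra.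
rewrite Hsum in Hit.
assert (4 * T^2 * (1 - g) * (PI/4 - PI/2/INR N) <= 4 * T^2 * (1 - g) * sumN (fun i => cos (th N (S i)) * (sin (th N (S i)) - sin (th N i))) N)
  by (apply Rmult_le_compat_l; auto).
lra.
Qed.

Lemma disc_area p t : 0 < t -> PI * t^2 <= area (odisc p t).
Proof.
intros Ht. pose proof PI_RGT_0. apply Rnot_lt_le. intros Hlt.
set (gap := PI * t^2 - area (odisc p t)).
assert (Hgap : 0 < gap) by (unfold gap; lra).
destruct (INR_archimed gap (5 * PI * t^2)) as [N HN]. lra.
pose proof (disc_area_N p t (N + 2) Ht ltac:(lia)).
rewrite plus_INR in H0. simpl (INR 2) in H0. pose proof (pos_INR N).
assert (PI * t ^ 2 * (5 / (INR N + (1 + 1))) < gap).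
{ apply (Rmult_lt_reg_r (INR N + (1+1))). lra. unfold Rdiv.
  replace (PI * t ^ 2 * (5 * / (INR N + (1 + 1))) * (INR N + (1 + 1))) with (5 * PI * t^2) by (field; lra).
  nra. }
unfold gap in H2. nra.
Qed.

Lemma dist2_tri x y z : dist2 x z <= dist2 x y + dist2 y z.
Proof.
unfold dist2. pose proof (triangle (fst x) (snd x) (fst z) (snd z) (fst y) (snd y)) as H.
unfold dist_euc in H. rewrite !Rsqr_pow2 in H. exact H.
Qed.

Lemma dist2_sym x y : dist2 x y = dist2 y x.
Proof. unfold dist2. f_equal. ring. Qed.

Lemma dist2_nonneg x y : 0 <= dist2 x y.
Proof. apply sqrt_pos. Qed.

Lemma dist2_refl x : dist2 x x = 0.
Proof. unfold dist2. replace ((fst x - fst x) ^ 2 + (snd x - snd x) ^ 2) with 0 by ring. apply sqrt_0. Qed.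

Lemma dists_bounded B : bounded2 B -> bound (dists B).
Proof.
intros HB. destruct (bounded_box B HB) as [M [HM0 HM]]. exists (4 * M).
intros d [x [y [Hx [Hy ->]]]]. destruct (HM x Hx). destruct (HM y Hy).
unfold dist2. eapply Rle_trans. apply norm_le_abs.
assert (Rabs (fst x - fst y) <= Rabs (fst x) + Rabs (fst y)) by (unfold Rabs; repeat destruct Rcase_abs; lra).
assert (Rabs (snd x - snd y) <= Rabs (snd x) + Rabs (snd y)) by (unfold Rabs; repeat destruct Rcase_abs; lra).
lra.
Qed.

Lemma diam_spec B : (exists x, B x) -> bounded2 B -> is_lub (dists B) (diam B).
Proof.
intros [x Hx] HB. unfold diam. apply epsilon_spec.
destruct (completeness (dists B) (dists_bounded B HB)) as [m Hm].
exists (dist2 x x). exists x, x. auto. exists m; auto.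
Qed.

Lemma diam_ge B x y : bounded2 B -> B x -> B y -> dist2 x y <= diam B.
Proof. intros HB Hx Hy. apply (diam_spec B (ex_intro _ x Hx) HB). exists x, y. auto. Qed.

Lemma diam_le B K x0 : bounded2 B -> B x0 -> (forall x y, B x -> B y -> dist2 x y <= K) -> diam B <= K.
Proof.
intros HB H0 H. apply (diam_spec B (ex_intro _ x0 H0) HB). intros d [x [y [Hx [Hy ->]]]]. auto.
Qed.

Lemma norm_scal k u1 u2 : u1^2 + u2^2 = 1 -> sqrt ((k * u1)^2 + (k * u2)^2) = Rabs k.
Proof.
intros H. replace ((k * u1)^2 + (k * u2)^2) with (k^2) by (rewrite <- (Rmult_1_r (k^2)), <- H; ring).
rewrite <- (sqrt_Rsqr_abs k). f_equal. unfold Rsqr. ring.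
Qed.

Lemma closed_disc_bounded c r : bounded2 (closed_disc c r).
Proof.
apply (bounded_sub _ (odisc c (r + 1))). apply odisc_bounded. intros z Hz. unfold closed_disc, odisc in *. lra.
Qed.

Lemma half_disc (C : pt -> Prop) c x r eta :
  bounded2 C -> C c -> C x -> 0 < r ->
  0 < eta -> eta < dist2 x c + r - diam C ->
  area C + PI * (dist2 x c + r - diam C - eta)^2 / 2 <= area (union2 C (closed_disc c r)).
Proof.
intros HC Hc Hx Hr He Ht.
set (dl := diam C). set (rho := dist2 x c). set (t := rho + r - dl).
assert (Ht' : eta < t) by (unfold t, rho, dl; lra).
assert (Hrho : rho <= dl) by (apply diam_ge; auto).
assert (Hdl0 : 0 <= dl). { pose proof (diam_ge C c c HC Hc Hc). rewrite dist2_refl in H. auto. }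
assert (Hrho0 : 0 <= rho) by apply dist2_nonneg.
assert (Hu : exists u1 u2, u1^2 + u2^2 = 1 /\ fst c - fst x = rho * u1 /\ snd c - snd x = rho * u2).
{ unfold rho, dist2. set (a := fst x - fst c). set (b := snd x - snd c).
  assert (Hab : 0 <= a^2 + b^2) by nra.
  destruct (Req_dec (sqrt (a^2 + b^2)) 0) as [Hz|Hnz].
  - apply sqrt_eq_0 in Hz; auto. assert (a = 0) by nra. assert (b = 0) by nra.
    exists 1, 0. unfold a, b in *. split. ring. split; rewrite Hz, sqrt_0; lra.
  - assert (Hp : 0 < sqrt (a^2 + b^2)) by (pose proof (sqrt_pos (a^2+b^2)); lra).
    exists (- a / sqrt (a^2+b^2)), (- b / sqrt (a^2+b^2)). split; [|split].
    + field_simplify; [|lra]. rewrite pow2_sqrt by auto. field. intro h. apply Hnz. rewrite h. apply sqrt_0.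
    + replace (fst c - fst x) with (-a) by (unfold a; ring). field. lra.
    + replace (snd c - snd x) with (-b) by (unfold b; ring). field. lra. }
destruct Hu as [u1 [u2 [Hu [Hu1 Hu2]]]].
set (k := dl + eta). set (s := t - eta).
assert (Hs : 0 < s) by (unfold s; lra).
set (c2 := (fst x + k * u1, snd x + k * u2)).
set (Kp := fun z => dist2 c2 z < s /\ 0 <= (fst z - fst c2) * u1 + (snd z - snd c2) * u2).
set (Km := fun z => dist2 c2 z < s /\ (fst z - fst c2) * u1 + (snd z - snd c2) * u2 <= 0).
assert (HKp : bounded2 Kp) by (apply (bounded_sub _ (odisc c2 s)); [apply odisc_bounded| intros z [h _]; auto]).
assert (HKm : bounded2 Km) by (apply (bounded_sub _ (odisc c2 s)); [apply odisc_bounded| intros z [h _]; auto]).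
assert (H1 : PI * s^2 <= area Kp + area Km).
{ pose proof (disc_area c2 s Hs). pose proof (area_subadd Kp Km HKp HKm).
  assert (area (odisc c2 s) <= area (union2 Kp Km)).
  { apply area_mono. apply bounded_union; auto. intros z Hz. unfold union2, Kp, Km.
    destruct (Rle_dec 0 ((fst z - fst c2) * u1 + (snd z - snd c2) * u2)); [left|right]; split; auto; lra. }
  lra. }
assert (H2 : area Km <= area Kp).
{ apply (area_refl Km Kp c2); auto. intros z [h1 h2]. unfold Kp. simpl fst; simpl snd. split.
  - unfold dist2 in *. simpl fst in *; simpl snd in *.
    replace ((fst x + k * u1 - (2 * (fst x + k * u1) - fst z)) ^ 2 + (snd x + k * u2 - (2 * (snd x + k * u2) - snd z)) ^ 2)
      with ((fst x + k * u1 - fst z) ^ 2 + (snd x + k * u2 - snd z) ^ 2) by ring. auto.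
  - unfold c2 in h2; simpl fst in h2; simpl snd in h2. nra. }
assert (Hsub : forall z, Kp z -> closed_disc c r z).
{ intros z [h1 h2]. unfold closed_disc.
  pose proof (dist2_tri c c2 z).
  assert (dist2 c c2 = k - rho).
  { unfold dist2, c2. simpl fst; simpl snd.
    replace (fst c - (fst x + k * u1)) with ((rho - k) * u1) by lra.
    replace (snd c - (snd x + k * u2)) with ((rho - k) * u2) by lra.
    rewrite norm_scal by auto. rewrite Rabs_left1. ring. unfold k; lra. }
  unfold s, t, k in *. lra. }
assert (Hsep : forall y z, C y -> Kp z -> eta <= dist2 y z).
{ intros y z Hy [h1 h2].
  pose proof (dist2_tri x y z). pose proof (diam_ge C x y HC Hx Hy). fold dl in H0.
  assert (k <= dist2 x z).
  { unfold dist2. rewrite <- (sqrt_pow2 k) by (unfold k; lra). apply sqrt_le_1_alt.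
    unfold c2 in h2. simpl fst in h2; simpl snd in h2.
    set (w1 := fst z - (fst x + k * u1)) in *. set (w2 := snd z - (snd x + k * u2)) in *.
    replace (fst x - fst z) with (- (k * u1 + w1)) by (unfold w1; ring).
    replace (snd x - snd z) with (- (k * u2 + w2)) by (unfold w2; ring).
    assert (0 <= k) by (unfold k; lra).
    replace ((- (k * u1 + w1)) ^ 2 + (- (k * u2 + w2)) ^ 2) with (k^2 * (u1^2 + u2^2) + 2 * k * (w1 * u1 + w2 * u2) + (w1^2 + w2^2)) by ring.
    rewrite Hu. nra. }
  unfold k, dl in *. lra. }
assert (HU : bounded2 (union2 C (closed_disc c r))) by (apply bounded_union; auto; apply closed_disc_bounded).
pose proof (area_sep C Kp eta HC HKp He Hsep) as H3.
assert (area (union2 C Kp) <= area (union2 C (closed_disc c r))).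
{ apply area_mono; auto. intros z [h|h]; [left|right]; auto. }
fold t. replace (t - eta) with s by reflexivity. lra.
Qed.

Lemma half_disc_lim (C : pt -> Prop) c x r :
  bounded2 C -> C c -> C x -> 0 < r -> 0 < dist2 x c + r - diam C ->
  PI * (dist2 x c + r - diam C)^2 / 2 <= area (union2 C (closed_disc c r)) - area C.
Proof.
intros HC Hc Hx Hr Ht. set (t := dist2 x c + r - diam C) in *. pose proof PI_RGT_0.
apply Rnot_lt_le. intros Hlt.
set (gap := PI * t^2 / 2 - (area (union2 C (closed_disc c r)) - area C)).
assert (Hgap : 0 < gap) by (unfold gap; lra).
set (eta := Rmin (t/2) (gap / (PI * t + 1))).
assert (He : 0 < eta). { unfold eta. apply Rmin_glb_lt. lra. apply Rdiv_lt_0_compat; nra. }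
assert (He2 : eta <= t/2) by apply Rmin_l.
assert (He3 : eta * (PI * t + 1) <= gap).
{ assert (eta <= gap / (PI * t + 1)) by apply Rmin_r.
  apply (Rmult_le_compat_r (PI * t + 1)) in H0; [|nra]. unfold Rdiv in H0.
  rewrite Rmult_assoc, Rinv_l in H0 by nra. lra. }
pose proof (half_disc C c x r eta HC Hc Hx Hr He ltac:(unfold t in *; lra)).
fold t in H0. unfold gap in *. nra.
Qed.

Theorem lemma4 (C : pt -> Prop) (c : pt) (r : R) :
  compact2 C -> 0 < r -> C c ->
  diam (union2 C (closed_disc c r)) <=
  Rmax (diam C + sqrt (2 * (area (union2 C (closed_disc c r)) - area C) / PI))
       (sqrt (4 * area (union2 C (closed_disc c r)) / PI)).
Proof.
intros [_ HC] Hr Hc. pose proof PI_RGT_0.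
set (U := union2 C (closed_disc c r)).
assert (HU : bounded2 U) by (apply bounded_union; auto; apply closed_disc_bounded).
set (A := area U). set (a := area C). set (dl := diam C).
set (RHS := Rmax (dl + sqrt (2 * (A - a) / PI)) (sqrt (4 * A / PI))).
assert (R1 : dl <= RHS).
{ unfold RHS. pose proof (sqrt_pos (2 * (A - a) / PI)). pose proof (Rmax_l (dl + sqrt (2 * (A - a) / PI)) (sqrt (4 * A / PI))). lra. }
assert (HD : PI * r^2 <= A).
{ pose proof (disc_area c r Hr). unfold A. eapply Rle_trans. exact H0. apply area_mono; auto.
  intros z Hz. right. unfold closed_disc, odisc in *. lra. }
assert (R2 : 2 * r <= RHS).
{ eapply Rle_trans; [|apply Rmax_r]. rewrite <- (sqrt_pow2 (2 * r)) by lra. apply sqrt_le_1_alt.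
  apply (Rmult_le_reg_r PI). lra. unfold Rdiv. rewrite Rmult_assoc, Rinv_l by lra. nra. }
assert (Rcd : forall x y, C x -> closed_disc c r y -> dist2 x y <= RHS).
{ intros x y Hx Hy. unfold closed_disc in Hy.
  pose proof (dist2_tri x c y). pose proof (diam_ge C x c HC Hx Hc). fold dl in H1.
  destruct (Rle_dec (dist2 x c + r) dl). lra.
  pose proof (half_disc_lim C c x r HC Hc Hx Hr ltac:(fold dl; lra)) as Hh. fold dl U A a in Hh.
  assert (dist2 x c + r - dl <= sqrt (2 * (A - a) / PI)).
  { rewrite <- (sqrt_pow2 (dist2 x c + r - dl)) by lra. apply sqrt_le_1_alt.
    apply (Rmult_le_reg_r PI). lra. unfold Rdiv. rewrite Rmult_assoc, Rinv_l by lra. nra. }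
  pose proof (Rmax_l (dl + sqrt (2 * (A - a) / PI)) (sqrt (4 * A / PI))) as H5. fold RHS in H5. lra. }
apply (diam_le U RHS c HU (or_introl Hc)).
intros x y [Hx|Hx] [Hy|Hy].
- pose proof (diam_ge C x y HC Hx Hy). fold dl in H0. lra.
- apply Rcd; auto.
- rewrite dist2_sym. apply Rcd; auto.
- unfold closed_disc in Hx, Hy. pose proof (dist2_tri x c y). rewrite (dist2_sym x c) in H0. lra.
Qed.
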